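(* Suppose that for every $c\in\{1,\dots,K-1\}$, $$\bar p_c(\bm x,\bar Y)=\binom{K-1}{c}^{-1}\sum_{y\notin \bar Y}p(\bm x,y)\qquad(\bm x\in\mathcal X,\ \bar Y\in\overline{\mathcal Y}_c),$$ and let $\pi_1,\dots,\pi_{K-1}\ge0$ with $\sum_c\pi_c=1$. Let $\bar p$ be the density on $\mathcal X\times\overline{\mathcal Y}$, $\overline{\mathcal Y}=\bigcup_{c=1}^{K-1}\overline{\mathcal Y}_c$, given by $\bar p(\bm x,\bar Y)=\pi_c\,\bar p_c(\bm x,\bar Y)$ whenever $|\bar Y|=c$, and let $\bar p(\bm x)$ be its marginal on $\mathcal X$. Put $\lambda=(K-1)/\sum_{c=1}^{K-1}c\,\pi_c$ and let $\gamma\in[0,1]$. Then for any loss $\ell$ and decision function $\bm g$ (with finite expectations), $$R(\bm g)=\mathbb E_{\bar p(\bm x,\bar Y)}\Big[\mathcal L(\bm g(\bm x))-\lambda\sum_{y\in\bar Y}\ell(\bm g(\bm x),y)\Big]$$ and $$R(\bm g)=\mathbb E_{\bar p(\bm x,\bar Y)}\Big[(1-\gamma)\mathcal L(\bm g(\bm x))-\lambda\sum_{y\in\bar Y}\ell(\bm g(\bm x),y)\Big]+\gamma\,\mathbb E_{\bar p(\bm x)}\big[\mathcal L(\bm g(\bm x))\big].$$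
   Context: Let $K\ge 2$, $\mathcal X\subseteq\mathbb R^d$ the feature space and $\mathcal Y=\{1,\dots,K\}$ the label space. Let $p(\bm x,y)$ be a joint density on $\mathcal X\times\mathcal Y$ with marginal density $p(\bm x)$. For $c\in\{1,\dots,K-1\}$, $\overline{\mathcal Y}_c$ denotes the collection of all $c$-element subsets of $\{1,\dots,K\}$, and $\bar p_c(\bm x,\bar Y)$ is a density on $\mathcal X\times\overline{\mathcal Y}_c$. A decision function is a map $\bm g:\mathcal X\to\mathbb R^K$, a loss is a function $\ell:\mathbb R^K\times\mathcal Y\to[0,\infty)$, the classification risk is $R(\bm g)=\mathbb E_{p(\bm x,y)}[\ell(\bm g(\bm x),y)]$, and the cumulative loss is $\mathcal L(\bm g(\bm x))=\sum_{y=1}^K\ell(\bm g(\bm x),y)$. *)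

(* Defs.v *)
(* Scalars: an arbitrary real field R (the reals are an instance).
   Labels {1..K} are represented by 'I_K (0-indexed). *)
From HB Require Import structures.
From mathcomp Require Import all_boot all_order all_algebra.
Set Implicit Arguments. Unset Strict Implicit. Unset Printing Implicit Defensive.
Import Order.TTheory GRing.Theory Num.Theory.
Local Open Scope ring_scope.

(* Abstract integration over the feature space X: a class [Int] of integrable
   functions closed under sums and scalar multiples, and an integral [E]
   linear on that class (e.g. Lebesgue integral over X ⊆ R^d). *)
Definition linear_integral (R : realFieldType) (X : Type)
  (Int : (X -> R) -> Prop) (E : (X -> R) -> R) : Prop :=
  [/\ (forall f g, Int f -> Int g -> Int (fun x => f x + g x)),
      (forall (c : R) f, Int f -> Int (fun x => c * f x)),
      (forall f g, Int f -> Int g -> E (fun x => f x + g x) = E f + E g)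
    & (forall (c : R) f, Int f -> E (fun x => c * f x) = c * E f)].

Definition in_Ybar (K : nat) (Y : {set 'I_K}) : bool := (1 <= #|Y| <= K.-1)%N.

Definition cum_loss (R : realFieldType) (K : nat) (ell : 'rV[R]_K -> 'I_K -> R)
  (v : 'rV[R]_K) : R := \sum_(y < K) ell v y.

Definition risk_integrand (R : realFieldType) (X : Type) (K : nat)
  (p : X -> 'I_K -> R) (ell : 'rV[R]_K -> 'I_K -> R) (g : X -> 'rV[R]_K) : X -> R :=
  fun x => \sum_(y < K) p x y * ell (g x) y.

Definition risk (R : realFieldType) (X : Type) (K : nat) (E : (X -> R) -> R)
  (p : X -> 'I_K -> R) (ell : 'rV[R]_K -> 'I_K -> R) (g : X -> 'rV[R]_K) : R :=
  E (risk_integrand p ell g).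

Definition pbar (R : realFieldType) (X : Type) (K : nat) (pi : nat -> R)
  (pbc : nat -> X -> {set 'I_K} -> R) (x : X) (Y : {set 'I_K}) : R :=
  if in_Ybar Y then pi #|Y| * pbc #|Y| x Y else 0.

Definition pbar_marg (R : realFieldType) (X : Type) (K : nat)
  (pb : X -> {set 'I_K} -> R) (x : X) : R :=
  \sum_(Y : {set 'I_K} | in_Ybar Y) pb x Y.

Definition joint_integrand (R : realFieldType) (X : Type) (K : nat)
  (pb : X -> {set 'I_K} -> R) (F : X -> {set 'I_K} -> R) : X -> R :=
  fun x => \sum_(Y : {set 'I_K} | in_Ybar Y) pb x Y * F x Y.

Definition Ejoint (R : realFieldType) (X : Type) (K : nat) (E : (X -> R) -> R)
  (pb : X -> {set 'I_K} -> R) (F : X -> {set 'I_K} -> R) : R :=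
  E (joint_integrand pb F).

Definition lambda_of (R : realFieldType) (K : nat) (pi : nat -> R) : R :=
  (K.-1)%:R / \sum_(1 <= c < K) c%:R * pi c.

(* Main.v *)
Require Import Defs.
From HB Require Import structures.
From mathcomp Require Import all_boot all_order all_algebra.
Import Order.TTheory GRing.Theory Num.Theory.
Local Open Scope ring_scope.

From mathcomp Require Import zify ring lra.
From Stdlib Require Import FunctionalExtensionality.

Lemma cntN (R : realFieldType) (K:nat) (y:'I_K) c :
  \sum_(Y : {set 'I_K} | (#|Y| == c)%N && (y \notin Y)) (1:R) = ('C(K.-1,c))%:R.
Proof.
rewrite sumr_const.
have -> : #|[pred Y : {set 'I_K} | (#|Y| == c)%N && (y \notin Y)]| = #|[set A : {set 'I_K} | A \subset [set~ y] & #|A| == c]|.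
  apply: eq_card => A; rewrite !inE andbC; congr (_ && _).
  by rewrite subsets_disjoint setCK disjoint_sym disjoints1.
by rewrite cards_draws cardsC1 card_ord.
Qed.
Lemma cntM (R : realFieldType) (K:nat) (y y':'I_K) c : y != y' ->
  \sum_(Y : {set 'I_K} | ((#|Y| == c)%N && (y \notin Y)) && (y' \in Y)) (1:R)
   = ('C(K.-1,c))%:R - ('C(K.-2,c))%:R.
Proof.
move=> nyy.
have H2 : \sum_(Y : {set 'I_K} | ((#|Y| == c)%N && (y \notin Y)) && (y' \notin Y)) (1:R) = ('C(K.-2,c))%:R.
  rewrite sumr_const.
  have -> : #|[pred Y : {set 'I_K} | ((#|Y| == c)%N && (y \notin Y)) && (y' \notin Y)]| = #|[set A : {set 'I_K} | A \subset ~: [set y; y'] & #|A| == c]|.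
    apply: eq_card => A; rewrite !inE setCU subsetI !subsets_disjoint !setCK.
    rewrite ![[disjoint A & _]]disjoint_sym !disjoints1.
    by case: (#|A| == c)%N; case: (y \in A); case: (y' \in A).
  rewrite cards_draws.
  have := cardsC [set y; y']; rewrite cards2 nyy card_ord => H.
  by have -> : #|~: [set y; y']| = K.-2 by lia.
rewrite -(cntN R _ y c) [in RHS](bigID (fun Y : {set 'I_K} => y' \in Y)) /= H2 addrK.
done.
Qed.
Lemma sumS (R : realFieldType) (K:nat) (ell : 'I_K -> R) (y:'I_K) c :
  \sum_(Y : {set 'I_K} | (#|Y| == c)%N && (y \notin Y)) \sum_(y' in Y) ell y'
  = (('C(K.-1,c))%:R - ('C(K.-2,c))%:R) * (\sum_(y' < K) ell y' - ell y).
Proof.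
under eq_bigr do rewrite big_mkcond /=.
rewrite exchange_big /=.
have E : forall y', \sum_(Y : {set 'I_K} | (#|Y| == c)%N && (y \notin Y)) (if y' \in Y then ell y' else 0)
   = ell y' * \sum_(Y : {set 'I_K} | ((#|Y| == c)%N && (y \notin Y)) && (y' \in Y)) (1:R).
  move=> y'; rewrite mulr_sumr [in RHS]big_mkcondr /=.
  by apply: eq_bigr => Y _; case: (y' \in Y); rewrite ?mulr1.
under eq_bigr do rewrite E.
rewrite (bigD1 y) //= [in RHS](bigD1 y) //= addrAC subrr add0r.
rewrite big1 ?mulr0 ?add0r; last by move=> Y; case: (y \in Y); rewrite ?andbF.
rewrite mulr_sumr; apply: eq_bigr => y' ny; by rewrite cntM 1?eq_sym // mulrC.
Qed.
Lemma inner (R : realFieldType) (K:nat) (p ell : 'I_K -> R) c (a lam : R) :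
  \sum_(Y : {set 'I_K} | (#|Y| == c)%N)
     (\sum_(y < K | y \notin Y) p y) * (a * \sum_(y < K) ell y - lam * \sum_(y' in Y) ell y')
  = ('C(K.-1,c))%:R * a * (\sum_(y < K) ell y) * (\sum_(y < K) p y)
    - lam * (('C(K.-1,c))%:R - ('C(K.-2,c))%:R) *
      ((\sum_(y < K) p y) * (\sum_(y < K) ell y) - \sum_(y < K) p y * ell y).
Proof.
set L := \sum_(y < K) ell y.
set D := (('C(K.-1,c))%:R - ('C(K.-2,c))%:R) : R.
under eq_bigr do rewrite mulr_suml big_mkcond /=.
rewrite exchange_big /=.
have E : forall y : 'I_K, \sum_(Y : {set 'I_K} | (#|Y| == c)%N)
     (if y \notin Y then p y * (a * L - lam * \sum_(y' in Y) ell y') else 0)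
   = p y * (a * L * ('C(K.-1,c))%:R - lam * D * L) + lam * D * (p y * ell y).
  move=> y; rewrite -big_mkcondr /= -mulr_sumr sumrB -mulr_sumr -mulr_sumr.
  rewrite sumS -/L -/D.
  have -> : \sum_(Y : {set 'I_K} | (#|Y| == c)%N && (y \notin Y)) L = L * ('C(K.-1,c))%:R.
    by rewrite -(cntN R _ y c) mulr_sumr; apply: eq_bigr => *; rewrite mulr1.
  ring.
under eq_bigr do rewrite E.
rewrite big_split /= -mulr_suml -mulr_sumr; ring.
Qed.
Lemma part (R : realFieldType) (K:nat) (G : {set 'I_K} -> R) :
  \sum_(Y : {set 'I_K} | in_Ybar Y) G Y = \sum_(1 <= c < K) \sum_(Y : {set 'I_K} | (#|Y| == c)%N) G Y.
Proof.
under [in RHS]eq_bigr do rewrite big_mkcond.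
rewrite exchange_big /= big_mkcond; apply: eq_bigr => Y _.
rewrite /in_Ybar.
case h : (1 <= #|Y| < K)%N.
  have -> : (1 <= #|Y| <= K.-1)%N = true by lia.
  rewrite (bigD1_seq #|Y|) ?mem_index_iota ?iota_uniq //= eqxx big1 ?addr0 //.
  by move=> c /negbTE; rewrite eq_sym => ->.
have -> : (1 <= #|Y| <= K.-1)%N = false by lia.
rewrite big1_seq // => c /andP [_]; rewrite mem_index_iota.
by case: eqP => // <-; rewrite h.
Qed.
Lemma key (R : realFieldType) K c : (1 <= c)%N -> (c < K)%N ->
  (('C(K.-1,c))%:R : R)^-1 * ('C(K.-1,c)%:R - 'C(K.-2,c)%:R) = c%:R / (K.-1)%:R.
Proof.
case: K => [|[|n]] //; case: c => // m _ hc /=.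
have -> : ('C(n.+1, m.+1)%:R : R) - 'C(n, m.+1)%:R = 'C(n, m)%:R.
  by rewrite binS natrD addrAC subrr add0r.
have H := congr1 (fun k => k%:R : R) (mul_bin_diag n.+1 m); rewrite /= !natrM in H.
have nz1 : (n.+1%:R : R) != 0 by rewrite pnatr_eq0.
have nzC : ('C(n.+1, m.+1)%:R : R) != 0 by rewrite pnatr_eq0 -lt0n bin_gt0.
have -> : ('C(n, m)%:R : R) = m.+1%:R * 'C(n.+1, m.+1)%:R / n.+1%:R.
  by rewrite -H mulrAC mulfV ?mul1r.
by field; rewrite nzC nat1r nz1.
Qed.

Lemma pointwise (R : realFieldType) (X : Type) (K : nat)
  (p : X -> 'I_K -> R) (pbc : nat -> X -> {set 'I_K} -> R) (pi : nat -> R)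
  (ell : 'rV[R]_K -> 'I_K -> R) (g : X -> 'rV[R]_K) (a : R) (x : X) :
  (2 <= K)%N ->
  (forall (c : nat) x (Y : {set 'I_K}), (1 <= c <= K.-1)%N -> #|Y| = c ->
     pbc c x Y = ('C(K.-1, c)%:R)^-1 * \sum_(y < K | y \notin Y) p x y) ->
  (forall c, 0 <= pi c) -> \sum_(1 <= c < K) pi c = 1 ->
  joint_integrand (pbar pi pbc) (fun x Y =>
         a * cum_loss ell (g x) - lambda_of K pi * \sum_(y in Y) ell (g x) y) x
  = risk_integrand p ell g x - (1 - a) * (\sum_(y < K) p x y) * cum_loss ell (g x).
Proof.
move=> K2 hpbc hpi0 hpi1.
rewrite /joint_integrand /risk_integrand /cum_loss.
set L := \sum_(y < K) ell (g x) y.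
set P := \sum_(y < K) p x y.
set r := \sum_(y < K) p x y * ell (g x) y.
set lam := lambda_of K pi.
under eq_bigr => Y hY do rewrite /pbar hY.
rewrite part.
transitivity (\sum_(1 <= c < K) pi c * (a * L * P - lam * (c%:R / (K.-1)%:R) * (P * L - r))).
  apply: eq_big_nat => c hc.
  transitivity (pi c * (('C(K.-1, c)%:R)^-1 * \sum_(Y : {set 'I_K} | (#|Y| == c)%N)
     (\sum_(y < K | y \notin Y) p x y) * (a * L - lam * \sum_(y' in Y) ell (g x) y'))).
    rewrite [in RHS]mulr_sumr [in RHS]mulr_sumr; apply: eq_bigr => Y /eqP hY.
    rewrite hY hpbc //; [ring | lia].
  rewrite inner -(key R) ?(andP hc).1 //; last by case/andP: hc.
  have nzC : ('C(K.-1, c)%:R : R) != 0.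
    by rewrite pnatr_eq0 -lt0n bin_gt0; case/andP: hc => _ ?; lia.
  by rewrite -/L -/P -/r; field.
set S := \sum_(1 <= c < K) c%:R * pi c.
have S1 : 1 <= S.
  rewrite -hpi1 /S; apply: ler_sum_nat => c /andP [c1 _].
  by apply: ler_peMl; rewrite ?hpi0 ?ler1n.
have nzS : S != 0 by apply/negP => /eqP S0; move: S1; rewrite S0 ler10.
have nzK : ((K.-1)%:R : R) != 0 by rewrite pnatr_eq0; lia.
rewrite (eq_bigr (fun c => a * L * P * pi c - (lam / (K.-1)%:R * (P * L - r)) * (c%:R * pi c))); last first.
  by move=> c _; ring.
rewrite sumrB -!mulr_sumr hpi1 -/S /lam /lambda_of -/S.
by field; rewrite nzS nzK.
Qed.
Theorem theorem5 (R : realFieldType) (X : Type) (K : nat)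
  (Int : (X -> R) -> Prop) (E : (X -> R) -> R)
  (p : X -> 'I_K -> R) (pbc : nat -> X -> {set 'I_K} -> R) (pi : nat -> R)
  (gamma : R) (ell : 'rV[R]_K -> 'I_K -> R) (g : X -> 'rV[R]_K) :
  (2 <= K)%N ->
  linear_integral Int E ->
  (* p is a joint density on X × Y *)
  (forall x y, 0 <= p x y) ->
  Int (fun x => \sum_(y < K) p x y) -> E (fun x => \sum_(y < K) p x y) = 1 ->
  (* complementary-label generation assumption, for each c ∈ {1,…,K-1} *)
  (forall (c : nat) x (Y : {set 'I_K}), (1 <= c <= K.-1)%N -> #|Y| = c ->
     pbc c x Y = ('C(K.-1, c)%:R)^-1 * \sum_(y < K | y \notin Y) p x y) ->
  (* mixture weights *)
  (forall c, 0 <= pi c) -> \sum_(1 <= c < K) pi c = 1 ->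
  0 <= gamma <= 1 ->
  (* loss *)
  (forall v y, 0 <= ell v y) ->
  (* finite expectations *)
  Int (risk_integrand p ell g) ->
  Int (joint_integrand (pbar pi pbc) (fun x Y =>
         cum_loss ell (g x) - lambda_of K pi * \sum_(y in Y) ell (g x) y)) ->
  Int (joint_integrand (pbar pi pbc) (fun x Y =>
         (1 - gamma) * cum_loss ell (g x) - lambda_of K pi * \sum_(y in Y) ell (g x) y)) ->
  Int (fun x => pbar_marg (pbar pi pbc) x * cum_loss ell (g x)) ->
  risk E p ell g
    = Ejoint E (pbar pi pbc) (fun x Y =>
         cum_loss ell (g x) - lambda_of K pi * \sum_(y in Y) ell (g x) y)
  /\
  risk E p ell g
    = Ejoint E (pbar pi pbc) (fun x Y =>
         (1 - gamma) * cum_loss ell (g x) - lambda_of K pi * \sum_(y in Y) ell (g x) y)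
      + gamma * E (fun x => pbar_marg (pbar pi pbc) x * cum_loss ell (g x)).

Proof.
move=> K2 hlin hp0 hIntP hEP hpbc hpi0 hpi1 hg hl0 hIr hI1 hI2 hIm.
case: hlin => hIadd hIscal hEadd hEscal.
have PW := fun (a : R) (x : X) => @pointwise R X K p pbc pi ell g a x K2 hpbc hpi0 hpi1.
have M : forall x, pbar_marg (pbar pi pbc) x * cum_loss ell (g x)
   = (\sum_(y < K) p x y) * cum_loss ell (g x).
  move=> x.
  have := congr1 (fun F => F) (PW 1 x); have := PW 0 x.
  rewrite /joint_integrand /pbar_marg => H0 H1.
  rewrite mulr_suml.
  have -> : \sum_(Y : {set 'I_K} | in_Ybar Y) pbar pi pbc x Y * cum_loss ell (g x) =
    (\sum_(Y : {set 'I_K} | in_Ybar Y) pbar pi pbc x Y * (1 * cum_loss ell (g x) - lambda_of K pi * \sum_(y in Y) ell (g x) y))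
    - \sum_(Y : {set 'I_K} | in_Ybar Y) pbar pi pbc x Y * (0 * cum_loss ell (g x) - lambda_of K pi * \sum_(y in Y) ell (g x) y).
    by rewrite -sumrB; apply: eq_bigr => Y _; ring.
  rewrite H1 H0; ring.
split.
  rewrite /risk /Ejoint; congr (E _); apply: functional_extensionality => x; symmetry.
  transitivity (joint_integrand (pbar pi pbc) (fun x Y =>
         1 * cum_loss ell (g x) - lambda_of K pi * \sum_(y in Y) ell (g x) y) x).
    by rewrite /joint_integrand; apply: eq_bigr => Y _; rewrite mul1r.
  by rewrite PW subrr !mul0r subr0.
rewrite /risk /Ejoint -hEscal // -hEadd //; last exact: hIscal.
congr (E _); apply: functional_extensionality => x.
by rewrite PW M; ring.
Qed.
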